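(* Let a group $G$ act 3-discontinuously on a compactum $T$, and let $A$ be a $G$-invariant set of self-linked entourages of $T$ consisting of finitely many $G$-orbits. Equip $\widetilde T=T\sqcup A$ with the subspace topology from $T\sqcup\mathrm{Ent}\,T$ (see context). Then the induced action of $G$ on $\widetilde T$ is 3-discontinuous, i.e. the induced action on the space $\Theta^3\widetilde T$ of 3-element subsets of $\widetilde T$ is properly discontinuous.
   Context: A compactum is a compact Hausdorff space with at least 3 points; an action is 3-discontinuous if the induced action on 3-element subsets is properly discontinuous. Let $S^2T$ be the space of unordered pairs of points of $T$ (diagonal pairs allowed), $\Delta^2T$ its diagonal. An entourage is a neighborhood of $\Delta^2T$ in $S^2T$; $\mathrm{Ent}\,T$ is the set of entourages. A set $U\subset T$ is $\mathbf e$-small if $\{x,y\}\in\mathbf e$ for all $x,y\in U$. Entourages $\mathbf a,\mathbf b$ are unlinked if $T=a\cup b$ for some $\mathbf a$-small $a$ and $\mathbf b$-small $b$, linked otherwise; $\mathbf a$ is self-linked if it is linked with itself. Topology on $T\sqcup\mathrm{Ent}\,T$: for $o\subset T$ let $\tilde o=o\cup\{\mathbf e\in\mathrm{Ent}\,T: T\setminus o\text{ is }\mathbf e\text{-small}\}$; a set $w\subset T\sqcup\mathrm{Ent}\,T$ is open iff for every $t\in w\cap T$ there is an open $o\subset T$ with $t\in o$ and $\tilde o\subset w$. (So each entourage is an isolated point and $T$ is a closed subspace.) $G$ acts on entourages through its action on $S^2T$. *)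

(* Defs.v *)
From Stdlib Require Import List.


Definition topology (X : Type) := (X -> Prop) -> Prop.

Definition is_topology {X : Type} (tX : topology X) : Prop :=
  tX (fun _ => True) /\
  (forall U V, tX U -> tX V -> tX (fun x => U x /\ V x)) /\
  (forall F : (X -> Prop) -> Prop, (forall U, F U -> tX U) ->
      tX (fun x => exists U, F U /\ U x)).

Definition compact {X : Type} (tX : topology X) (K : X -> Prop) : Prop :=
  forall F : (X -> Prop) -> Prop,
    (forall U, F U -> tX U) ->
    (forall x, K x -> exists U, F U /\ U x) ->
    exists l : list (X -> Prop),
      (forall U, In U l -> F U) /\ (forall x, K x -> exists U, In U l /\ U x).

Definition hausdorff {X : Type} (tX : topology X) : Prop :=
  forall x y, x <> y -> exists U V, tX U /\ tX V /\ U x /\ V y /\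
     (forall z, U z -> V z -> False).

Definition compactum {X : Type} (tX : topology X) : Prop :=
  is_topology tX /\ hausdorff tX /\ compact tX (fun _ => True) /\
  exists a b c : X, a <> b /\ a <> c /\ b <> c.

Definition subspace {Y : Type} (tY : topology Y) (P : Y -> Prop)
  : topology {y : Y | P y} :=
  fun U => exists V, tY V /\ forall z, U z <-> V (proj1_sig z).

Record group := Group {
  gcar :> Type;
  gmul : gcar -> gcar -> gcar;
  gone : gcar;
  ginv : gcar -> gcar;
  gmulA : forall x y z, gmul x (gmul y z) = gmul (gmul x y) z;
  gmul1 : forall x, gmul gone x = x;
  gmulV : forall x, gmul (ginv x) x = gone }.

(* an action of G on X by homeomorphisms (each act g is continuous,
   with continuous inverse act (ginv g)) *)
Record action (G : group) (X : Type) (tX : topology X) := Action {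
  act :> G -> X -> X;
  act1 : forall x, act (gone G) x = x;
  actM : forall g h x, act (gmul G g h) x = act g (act h x);
  act_cont : forall g U, tX U -> tX (fun x => U (act g x)) }.
Arguments action G {X} tX.
Arguments act {G X tX} _ _ _.

Definition is3set {X : Type} (S : X -> Prop) (a b c : X) : Prop :=
  a <> b /\ a <> c /\ b <> c /\ forall x, S x <-> (x = a \/ x = b \/ x = c).

Definition Theta3 (X : Type) :=
  {S : X -> Prop | exists a b c, is3set S a b c}.

(* quotient topology of (X^3 minus the big diagonal) by the symmetric group *)
Definition theta3_top {X : Type} (tX : topology X) : topology (Theta3 X) :=
  fun W => forall (S : Theta3 X) a b c, W S -> is3set (proj1_sig S) a b c ->
    exists Ua Ub Uc, tX Ua /\ tX Ub /\ tX Uc /\ Ua a /\ Ub b /\ Uc c /\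
      forall (S' : Theta3 X) x y z, Ua x -> Ub y -> Uc z ->
        is3set (proj1_sig S') x y z -> W S'.

(* The action of G on X is given as a relation R g x y ("g maps x to y");
   S' = g S in Theta3 X *)
Definition moves3 {G X : Type} (R : G -> X -> X -> Prop) (g : G)
  (S S' : Theta3 X) : Prop :=
  forall x, proj1_sig S' x <-> exists y, proj1_sig S y /\ R g y x.

Definition three_discontinuous {G X : Type} (tX : topology X)
  (R : G -> X -> X -> Prop) : Prop :=
  forall K : Theta3 X -> Prop, compact (theta3_top tX) K ->
    exists l : list G, forall g,
      (exists S S', K S /\ K S' /\ moves3 R g S S') -> In g l.

(* subsets of S^2 T are represented by symmetric relations on T *)
Definition symmetric {T : Type} (E : T -> T -> Prop) : Prop :=
  forall x y, E x y -> E y x.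

Definition prod_open {T : Type} (tT : topology T) (W : T -> T -> Prop) : Prop :=
  forall x y, W x y -> exists U V, tT U /\ tT V /\ U x /\ V y /\
    forall x' y', U x' -> V y' -> W x' y'.

(* E is a neighbourhood of the diagonal in S^2 T: it contains an open
   subset of S^2 T (a symmetric set open in T x T) containing the diagonal *)
Definition entourage {T : Type} (tT : topology T) (E : T -> T -> Prop) : Prop :=
  symmetric E /\
  exists W, symmetric W /\ prod_open tT W /\ (forall x, W x x) /\
    (forall x y, W x y -> E x y).

Definition Ent {T : Type} (tT : topology T) := {E : T -> T -> Prop | entourage tT E}.

Definition small {T : Type} (E : T -> T -> Prop) (U : T -> Prop) : Prop :=
  forall x y, U x -> U y -> E x y.

Definition unlinked {T : Type} (E F : T -> T -> Prop) : Prop :=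
  exists a b : T -> Prop, small E a /\ small F b /\ forall x, a x \/ b x.

Definition linked {T : Type} (E F : T -> T -> Prop) : Prop := ~ unlinked E F.

Definition self_linked {T : Type} (E : T -> T -> Prop) : Prop := linked E E.

(* image of a set of pairs under f (action of G on S^2 T) *)
Definition rel_img {T : Type} (f : T -> T) (E : T -> T -> Prop) : T -> T -> Prop :=
  fun x y => exists x' y', E x' y' /\ x = f x' /\ y = f y'.

Definition TEnt {T : Type} (tT : topology T) := (T + Ent tT)%type.

Definition tilde_top {T : Type} (tT : topology T) : topology (TEnt tT) :=
  fun w => forall t, w (inl t) ->
    exists o, tT o /\ o t /\ (forall x, o x -> w (inl x)) /\
      (forall e : Ent tT, small (proj1_sig e) (fun x => ~ o x) -> w (inr e)).

Definition inTA {T : Type} (tT : topology T) (A : Ent tT -> Prop) (z : TEnt tT) : Prop :=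
  match z with inl _ => True | inr e => A e end.

Definition Ttilde {T : Type} (tT : topology T) (A : Ent tT -> Prop) :=
  {z : TEnt tT | inTA tT A z}.

Definition Ttilde_top {T : Type} (tT : topology T) (A : Ent tT -> Prop)
  : topology (Ttilde tT A) := subspace (tilde_top tT) (inTA tT A).

Definition TEnt_rel {G : group} {T : Type} {tT : topology T} (a : action G tT)
  (g : G) (z z' : TEnt tT) : Prop :=
  match z, z' with
  | inl x, inl y => y = a g x
  | inr e, inr e' => forall x y, proj1_sig e' x y <-> rel_img (a g) (proj1_sig e) x y
  | _, _ => False
  end.

Definition Ttilde_rel {G : group} {T : Type} {tT : topology T} (a : action G tT)
  (A : Ent tT -> Prop) (g : G) (z z' : Ttilde tT A) : Prop :=
  TEnt_rel a g (proj1_sig z) (proj1_sig z').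

(* Main.v *)
Require Import Defs.
From Stdlib Require Import List.
From Stdlib Require Import Classical FunctionalExtensionality PropExtensionality ProofIrrelevance.

Lemma pred_ext {X : Type} (P Q : X -> Prop) : (forall x, P x <-> Q x) -> P = Q.
Proof. intro H. apply functional_extensionality. intro x. apply propositional_extensionality. apply H. Qed.

Definition comp {T : Type} (R S : T -> T -> Prop) x z := exists y, R x y /\ S y z.
Definition uopen {T : Type} (tT : topology T) (V : T -> T -> Prop) :=
  symmetric V /\ prod_open tT V /\ forall x, V x x.
Definition rinter {T : Type} (V W : T -> T -> Prop) x y := V x y /\ W x y.

Lemma top_true {X} (tX : topology X) : is_topology tX -> tX (fun _ => True).
Proof. intros [H _]. exact H. Qed.
Lemma top_inter {X} (tX : topology X) U V : is_topology tX -> tX U -> tX V -> tX (fun x => U x /\ V x).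
Proof. intros [_ [H _]]. apply H. Qed.
Lemma top_union {X} (tX : topology X) (F : (X -> Prop) -> Prop) : is_topology tX ->
  (forall U, F U -> tX U) -> tX (fun x => exists U, F U /\ U x).
Proof. intros [_ [_ H]]. apply H. Qed.

Lemma uopen_inter {T} (tT : topology T) V W : is_topology tT -> uopen tT V -> uopen tT W ->
  uopen tT (rinter V W).
Proof.
  intros ht [s1 [p1 r1]] [s2 [p2 r2]]. split; [|split].
  - intros x y [h1 h2]; split; auto.
  - intros x y [h1 h2].
    destruct (p1 x y h1) as [U1 [V1 [hU1 [hV1 [u1 [v1 b1]]]]]].
    destruct (p2 x y h2) as [U2 [V2 [hU2 [hV2 [u2 [v2 b2]]]]]].
    exists (fun z => U1 z /\ U2 z), (fun z => V1 z /\ V2 z).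
    repeat split; try apply top_inter; auto; try apply b1; try apply b2; tauto.
  - intro x; split; auto.
Qed.

Lemma uopen_true {T} (tT : topology T) : is_topology tT -> uopen tT (fun _ _ => True).
Proof.
  intro ht. split; [|split]; auto.
  - intros x y _; auto.
  - intros x y _. exists (fun _ => True), (fun _ => True). repeat split; try apply top_true; auto.
Qed.

Lemma uopen_OQ {T} (tT : topology T) O Q : tT O -> tT Q -> (forall p, ~ O p -> Q p) ->
  uopen tT (fun a b => (O a /\ O b) \/ (Q a /\ Q b)).
Proof.
  intros hO hQ hc. split; [|split].
  - intros x y H; tauto.
  - intros x y [[h1 h2]|[h1 h2]].
    + exists O, O. repeat split; auto.
    + exists Q, Q. repeat split; auto.
  - intro x. destruct (classic (O x)); [left|right]; auto.
Qed.

Lemma regular {T} (tT : topology T) : compactum tT -> forall O x, tT O -> O x ->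
  exists R Q, tT R /\ tT Q /\ R x /\ (forall p, R p -> Q p -> False) /\ (forall p, ~ O p -> Q p).
Proof.
  intros [ht [hh [hc _]]] O x hO hx.
  set (F := fun U => U = O \/ (tT U /\ exists U', tT U' /\ U' x /\ forall p, U' p -> U p -> False)).
  destruct (hc F) as [l [hl1 hl2]].
  - intros U [->|[H _]]; auto.
  - intros p _. destruct (classic (O p)) as [Hp|Hp].
    + exists O; split; [left|]; auto.
    + assert (x <> p) by (intro; subst; auto).
      destruct (hh x p H) as [U [V [hU [hV [hux [hvp hd]]]]]].
      exists V; split; auto. right. split; auto. exists U. repeat split; auto.
  - assert (aux : forall l', (forall U, In U l' -> F U) -> exists R, tT R /\ R x /\
       forall U, In U l' -> (exists U', tT U' /\ U' x /\ forall p, U' p -> U p -> False) ->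
       forall p, R p -> U p -> False).
    { induction l' as [|U l' IH]; intro Hl.
      - exists (fun _ => True). repeat split; try apply top_true; auto; try (intros U []).
      - destruct IH as [R [hR [hRx hR2]]]. { intros; apply Hl; right; auto. }
        destruct (classic (exists U', tT U' /\ U' x /\ forall p, U' p -> U p -> False)) as [[U' [h1 [h2 h3]]]|Hn].
        + exists (fun z => R z /\ U' z). repeat split; try apply top_inter; auto.
          all: intros U0 [<-|Hin] Hex p [hp1 hp2] hp3; eauto.
        + exists R. split; [auto|split; [auto|]]. intros U0 [<-|Hin] Hex p hp1 hp2; [exact (Hn Hex)|eauto]. }
    destruct (aux l hl1) as [R [hR [hRx hR2]]].
    exists R, (fun p => exists U, (In U l /\ (tT U /\ exists U', tT U' /\ U' x /\ forall p, U' p -> U p -> False)) /\ U p).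
    repeat split; auto.
    + apply top_union; auto. intros U [_ [h _]]; auto.
    + intros p hp [U [[hin [_ hex]] hU]]. eapply hR2; eauto.
    + intros p hp. destruct (hl2 p I) as [U [hin hU]].
      exists U. split; auto. split; auto. destruct (hl1 U hin) as [->|H]; auto. contradiction.
Qed.

Lemma Wpair {T} (tT : topology T) : compactum tT -> forall x y, x <> y ->
  exists W, uopen tT W /\ ~ W x y.
Proof.
  intros hT x y hxy. pose proof hT as [ht [hh [hc _]]].
  destruct (hh x y hxy) as [Ux [Uy [hUx [hUy [ux [uy hd]]]]]].
  destruct (regular tT hT Ux x hUx ux) as [R [Q [hR [hQ [hRx [hRQ hQc]]]]]].
  exists (fun a b => (Ux a /\ Ux b) \/ (Q a /\ Q b)). split.
  - apply uopen_OQ; auto.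
  - intros [[_ h]|[h _]]; eauto.
Qed.

Lemma unif {T} (tT : topology T) : compactum tT -> forall W, uopen tT W ->
  exists V, uopen tT V /\ forall x y z, V x y -> V y z -> W x z.
Proof.
  intros hT W [hWs [hWo hWr]]. pose proof hT as [ht [hh [hc _]]].
  set (F := fun R => tT R /\ exists O Q, tT O /\ tT Q /\ (forall a b, O a -> O b -> W a b) /\
     (forall p, R p -> Q p -> False) /\ (forall p, ~ O p -> Q p)).
  destruct (hc F) as [l [hl1 hl2]].
  - intros U [h _]; auto.
  - intros x _. destruct (hWo x x (hWr x)) as [U0 [U1 [h0 [h1 [u0 [u1 hb]]]]]].
    destruct (regular tT hT (fun z => U0 z /\ U1 z) x) as [R [Q [hR [hQ [hRx [hRQ hQc]]]]]].
    + apply top_inter; auto.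
    + split; auto.
    + exists R. split; auto. split; auto. exists (fun z => U0 z /\ U1 z), Q.
      repeat split; auto. apply top_inter; auto.
      intros a b [ha _] [_ hb']. apply hb; auto.
  - assert (aux : forall l', (forall U, In U l' -> F U) -> exists V, uopen tT V /\
      forall R, In R l' -> exists O Q, (forall a b, O a -> O b -> W a b) /\
        (forall p, R p -> Q p -> False) /\ forall a b, V a b -> (O a /\ O b) \/ (Q a /\ Q b)).
    { induction l' as [|R l' IH]; intro Hl.
      - exists (fun _ _ => True). split. apply uopen_true; auto. intros R [].
      - destruct IH as [V [hV hV2]]. { intros; apply Hl; right; auto. }
        destruct (Hl R (or_introl eq_refl)) as [_ [O [Q [hO [hQ [hOW [hRQ hQc]]]]]]].
        exists (rinter (fun a b => (O a /\ O b) \/ (Q a /\ Q b)) V). split.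
        + apply uopen_inter; auto. apply uopen_OQ; auto.
        + intros R0 [<-|Hin].
          * exists O, Q. repeat split; auto. intros a b [h _]; auto.
          * destruct (hV2 R0 Hin) as [O' [Q' [h1 [h2 h3]]]]. exists O', Q'. repeat split; auto.
            intros a b [_ h]; auto. }
    destruct (aux l hl1) as [V [hV hV2]]. exists V. split; auto.
    intros x y z hxy hyz. destruct (hl2 y I) as [R [hin hRy]].
    destruct (hV2 R hin) as [O [Q [hOW [hRQ hVOQ]]]].
    destruct (hVOQ x y hxy) as [[hx _]|[_ hq]]; [|exfalso; eauto].
    destruct (hVOQ y z hyz) as [[_ hz]|[hq _]]; [|exfalso; eauto].
    auto.
Qed.

Definition cc {X : Type} (P : (X -> Prop) -> Prop) := forall F, (forall U, F U -> P U) ->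
  (forall x, exists U, F U /\ U x) ->
  exists l, (forall U, In U l -> F U) /\ (forall x, exists U, In U l /\ U x).
Definition boxP {X Y : Type} (PX : (X -> Prop) -> Prop) (PY : (Y -> Prop) -> Prop)
  : (X * Y -> Prop) -> Prop :=
  fun W => exists U V, PX U /\ PY V /\ forall p, W p <-> (U (fst p) /\ V (snd p)).

Lemma prod_cc {X Y : Type} (PX : (X -> Prop) -> Prop) (PY : (Y -> Prop) -> Prop) :
  cc PX -> cc PY -> PX (fun _ => True) ->
  (forall U U', PX U -> PX U' -> PX (fun x => U x /\ U' x)) -> cc (boxP PX PY).
Proof.
  intros cX cY hT hI F hF hcov.
  set (FX := fun Ux => PX Ux /\ exists lW, (forall W, In W lW -> F W) /\
     forall x' y, Ux x' -> exists W, In W lW /\ W (x', y)).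
  destruct (cX FX) as [lU [hlU1 hlU2]].
  - intros U [h _]; auto.
  - intro x.
    set (FY := fun V => exists U W, F W /\ PX U /\ PY V /\
       (forall p, W p <-> (U (fst p) /\ V (snd p))) /\ U x).
    destruct (cY FY) as [lV [hlV1 hlV2]].
    + intros V [U [W [_ [_ [h _]]]]]; auto.
    + intro y. destruct (hcov (x, y)) as [W [hW hWp]].
      destruct (hF W hW) as [U [V [hU [hV hiff]]]].
      apply hiff in hWp. destruct hWp as [hux hvy]. exists V. split; auto.
      exists U, W. split; [auto|split; [auto|split; [auto|split; [exact hiff|auto]]]].
    + assert (aux : forall l', (forall V, In V l' -> FY V) -> exists Ux lW, PX Ux /\ Ux x /\
         (forall W, In W lW -> F W) /\ forall x' y, Ux x' -> (exists V, In V l' /\ V y) ->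
         exists W, In W lW /\ W (x', y)).
      { induction l' as [|V l' IH]; intro Hl.
        - exists (fun _ => True), nil. repeat split; auto.
          + intros W [].
          + intros x' y _ [V [[] _]].
        - destruct IH as [Ux [lW [h1 [h2 [h3 h4]]]]]. { intros; apply Hl; right; auto. }
          destruct (Hl V (or_introl eq_refl)) as [U [W [hW [hU [hV [hiff hux]]]]]].
          exists (fun z => U z /\ Ux z), (W :: lW). repeat split; auto.
          + intros W0 [<-|Hin]; auto.
          + intros x' y [hx1 hx2] [V0 [[<-|Hin] hy]].
            * exists W. split; [left; auto|]. apply hiff. simpl. auto.
            * destruct (h4 x' y hx2) as [W1 [hin hw]]; eauto. exists W1; split; [right|]; auto. }
      destruct (aux lV hlV1) as [Ux [lW [h1 [h2 [h3 h4]]]]].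
      exists Ux. split; auto. split; auto. exists lW. split; auto.
  - assert (aux : forall l', (forall U, In U l' -> FX U) -> exists lW, (forall W, In W lW -> F W) /\
       forall x' y, (exists U, In U l' /\ U x') -> exists W, In W lW /\ W (x', y)).
    { induction l' as [|U l' IH]; intro Hl.
      - exists nil. split. intros W []. intros x' y [U [[] _]].
      - destruct IH as [lW [h1 h2]]. { intros; apply Hl; right; auto. }
        destruct (Hl U (or_introl eq_refl)) as [_ [lW' [h1' h2']]].
        exists (lW' ++ lW). split.
        + intros W hin. apply in_app_or in hin. destruct hin; auto.
        + intros x' y [U0 [[<-|Hin] hx]].
          * destruct (h2' x' y hx) as [W [hin hw]]. exists W. split; auto. apply in_or_app; auto.
          * destruct (h2 x' y) as [W [hin hw]]; eauto. exists W. split; auto. apply in_or_app; auto. }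
    destruct (aux lU hlU1) as [lW [h1 h2]]. exists lW. split; auto.
    intros [x y]. apply h2. apply hlU2.
Qed.

Lemma cc_of_compact {X : Type} (tX : topology X) : compact tX (fun _ => True) -> cc tX.
Proof.
  intros hc F hF hcov. destruct (hc F hF) as [l [h1 h2]].
  - intros x _; auto.
  - exists l; split; auto.
Qed.

Lemma cc_T2 {T : Type} (tT : topology T) : is_topology tT -> compact tT (fun _ => True) ->
  cc (boxP tT tT).
Proof.
  intros ht hc. apply (prod_cc tT tT).
  - apply cc_of_compact; auto.
  - apply cc_of_compact; auto.
  - destruct ht; auto.
  - intros; destruct ht as [_ [h _]]; auto.
Qed.

Lemma cc_T3 {T : Type} (tT : topology T) : is_topology tT -> compact tT (fun _ => True) ->
  cc (boxP tT (boxP tT tT)).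
Proof.
  intros ht hc. apply (prod_cc tT (boxP tT tT)).
  - apply cc_of_compact; auto.
  - apply cc_T2; auto.
  - destruct ht; auto.
  - intros; destruct ht as [_ [h _]]; auto.
Qed.

Definition tri {X : Type} (x y z : X) : X -> Prop := fun w => w = x \/ w = y \/ w = z.
Lemma tri_is3 {X : Type} (x y z : X) : x <> y -> x <> z -> y <> z -> is3set (tri x y z) x y z.
Proof. intros; unfold is3set, tri; repeat split; auto; tauto. Qed.
Definition mk3 {X : Type} (x y z : X) (h1 : x <> y) (h2 : x <> z) (h3 : y <> z) : Theta3 X :=
  exist _ (tri x y z) (ex_intro _ x (ex_intro _ y (ex_intro _ z (tri_is3 x y z h1 h2 h3)))).

Definition QD {T : Type} (D : T -> T -> Prop) (S : Theta3 T) : Prop :=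
  exists x y z, is3set (proj1_sig S) x y z /\ ~ D x y /\ ~ D x z /\ ~ D y z.

Lemma QD_compact {T : Type} (tT : topology T) (D : T -> T -> Prop) :
  is_topology tT -> compact tT (fun _ => True) -> prod_open tT D -> (forall x, D x x) ->
  compact (theta3_top tT) (QD D).
Proof.
  intros ht hc hD hDr F hF hcov.
  set (B3 := fun (W : T * (T * T) -> Prop) => exists U1 U2 U3, tT U1 /\ tT U2 /\ tT U3 /\
     (forall p, W p <-> (U1 (fst p) /\ U2 (fst (snd p)) /\ U3 (snd (snd p)))) /\
     ((exists N, F N /\ forall S x y z, U1 x -> U2 y -> U3 z -> is3set (proj1_sig S) x y z -> N S)
      \/ (forall x y z, U1 x -> U2 y -> U3 z -> D x y \/ D x z \/ D y z))).
  destruct (cc_T3 tT ht hc B3) as [lW [hl1 hl2]].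
  - intros W [U1 [U2 [U3 [h1 [h2 [h3 [hiff _]]]]]]].
    exists U1, (fun q => U2 (fst q) /\ U3 (snd q)). split; auto. split.
    + exists U2, U3. repeat split; auto; tauto.
    + intro p. rewrite hiff. tauto.
  - intros [x [y z]].
    destruct (classic (D x y)) as [Hxy|Hxy].
    { destruct (hD x y Hxy) as [U [V [hU [hV [hux [hvy hb]]]]]].
      exists (fun p => U (fst p) /\ V (fst (snd p)) /\ True). split; [|simpl; auto].
      exists U, V, (fun _ => True). refine (conj hU (conj hV (conj _ (conj _ _)))).
      destruct ht; auto. intro; tauto. right. intros; left; auto. }
    destruct (classic (D x z)) as [Hxz|Hxz].
    { destruct (hD x z Hxz) as [U [V [hU [hV [hux [hvy hb]]]]]].
      exists (fun p => U (fst p) /\ True /\ V (snd (snd p))). split; [|simpl; auto].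
      exists U, (fun _ => True), V. refine (conj hU (conj _ (conj hV (conj _ _)))).
      destruct ht; auto. intro; tauto. right. intros; right; left; auto. }
    destruct (classic (D y z)) as [Hyz|Hyz].
    { destruct (hD y z Hyz) as [U [V [hU [hV [hux [hvy hb]]]]]].
      exists (fun p => True /\ U (fst (snd p)) /\ V (snd (snd p))). split; [|simpl; auto].
      exists (fun _ => True), U, V. refine (conj _ (conj hU (conj hV (conj _ _)))).
      destruct ht; auto. intro; tauto. right. intros; right; right; auto. }
    assert (nxy : x <> y) by (intro; subst; auto).
    assert (nxz : x <> z) by (intro; subst; auto).
    assert (nyz : y <> z) by (intro; subst; auto).
    destruct (hcov (mk3 x y z nxy nxz nyz)) as [N [hN hNS]].
    { exists x, y, z. repeat split; auto; apply tri_is3; auto. }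
    destruct (hF N hN (mk3 x y z nxy nxz nyz) x y z hNS (tri_is3 x y z nxy nxz nyz))
      as [Ua [Ub [Uc [h1 [h2 [h3 [ha [hb' [hc' hall]]]]]]]]].
    exists (fun p => Ua (fst p) /\ Ub (fst (snd p)) /\ Uc (snd (snd p))). split; [|simpl; auto].
    exists Ua, Ub, Uc. refine (conj h1 (conj h2 (conj h3 (conj _ _)))).
    intro; tauto. left. exists N. split; auto.
  - assert (aux : forall l, (forall W, In W l -> B3 W) -> exists lN, (forall N, In N lN -> F N) /\
       forall W, In W l -> forall S x y z, W (x, (y, z)) -> is3set (proj1_sig S) x y z ->
         ~ D x y -> ~ D x z -> ~ D y z -> exists N, In N lN /\ N S).
    { induction l as [|W l IH]; intro Hl.
      - exists nil. split. intros N []. intros W [].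
      - destruct IH as [lN [h1 h2]]. { intros; apply Hl; right; auto. }
        destruct (Hl W (or_introl eq_refl)) as [U1 [U2 [U3 [_ [_ [_ [hiff [[N [hN hNS]]|hbad]]]]]]]].
        + exists (N :: lN). split.
          * intros N0 [<-|Hin]; auto.
          * intros W0 [<-|Hin] S x y z hW his h1' h2' h3'.
            -- exists N. split; [left; auto|]. apply hiff in hW. simpl in hW.
               destruct hW as [u1 [u2 u3]]. eapply hNS; eauto.
            -- destruct (h2 W0 Hin S x y z) as [N0 [hin hn]]; auto. exists N0; split; [right|]; auto.
        + exists lN. split; auto.
          intros W0 [<-|Hin] S x y z hW his h1' h2' h3'.
          * apply hiff in hW. simpl in hW. destruct hW as [u1 [u2 u3]].
            destruct (hbad x y z u1 u2 u3) as [?|[?|?]]; contradiction.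
          * eapply h2; eauto. }
    destruct (aux lW hl1) as [lN [h1 h2]]. exists lN. split; auto.
    intros S [x [y [z [his [n1 [n2 n3]]]]]].
    destruct (hl2 (x, (y, z))) as [W [hin hW]].
    eapply h2; eauto.
Qed.

Definition D2r {T : Type} (D : T -> T -> Prop) x z := exists y, D x y /\ D y z.
Definition D3r {T : Type} (D : T -> T -> Prop) x z := exists y, D x y /\ D2r D y z.
Definition D4r {T : Type} (D : T -> T -> Prop) x z := exists y, D x y /\ D3r D y z.

Lemma mk2 {T} (D : T -> T -> Prop) a b c : D a b -> D b c -> D2r D a c.
Proof. intros; exists b; auto. Qed.
Lemma mk3r {T} (D : T -> T -> Prop) a b c d : D a b -> D b c -> D c d -> D3r D a d.
Proof. intros; exists b; split; auto; exists c; auto. Qed.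
Lemma mk4 {T} (D : T -> T -> Prop) a b c d e : D a b -> D b c -> D c d -> D d e -> D4r D a e.
Proof. intros; exists b; split; auto; exists c; split; auto; exists d; auto. Qed.

Lemma CL_sub {T : Type} (D V : T -> T -> Prop) (f : T -> T)
  (hDs : symmetric D) (hDr : forall x, D x x)
  (hV : forall x y, D4r D x y -> V x y)
  (star : forall x y z, ~ D x y -> ~ D x z -> ~ D y z -> ~ D (f x) (f y) -> ~ D (f x) (f z) ->
          ~ D (f y) (f z) -> False)
  zi zj (n1 : ~ D3r D zi zj) (n2 : ~ D3r D (f zi) (f zj))
  (cov : forall z, D zi z \/ D zj z \/ D (f zi) (f z) \/ D (f zj) (f z))
  t' (ht'1 : D zi t') (ht'2 : ~ D2r D (f zi) (f t')) (ht'3 : ~ D2r D (f zj) (f t'))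
  t (ht1 : ~ D2r D zi t) (ht2 : ~ D2r D zj t) :
  forall z, ~ V zi z -> V (f zj) (f z).
Proof.
  assert (hV1 : forall x y, D x y -> V x y).
  { intros; apply hV; apply (mk4 D x x x x y); auto. }
  assert (hV2 : forall x y, D2r D x y -> V x y).
  { intros x y [m [h1 h2]]; apply hV; apply (mk4 D x x x m y); auto. }
  assert (htj : D (f zj) (f t)).
  { destruct (cov t) as [h|[h|[h|h]]]; auto.
    - exfalso; apply ht1; apply (mk2 D zi zi t); auto.
    - exfalso; apply ht2; apply (mk2 D zj zj t); auto.
    - exfalso. apply (star t' zj t).
      + intro h'. apply n1. apply (mk3r D zi t' zj zj); auto.
      + intro h'. apply ht1. apply (mk2 D zi t' t); auto.
      + intro h'. apply ht2. apply (mk2 D zj zj t); auto.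
      + intro h'. apply ht'3. apply (mk2 D (f zj) (f zj) (f t')); auto.
      + intro h'. apply ht'2. apply (mk2 D (f zi) (f t) (f t')); auto.
      + intro h'. apply n2. apply (mk3r D (f zi) (f t) (f zj) (f zj)); auto. }
  intros z hz. apply NNPP. intro hz'.
  assert (nzi : ~ D zi z) by (intro; apply hz; auto).
  assert (nfj : ~ D (f zj) (f z)) by (intro; apply hz'; auto).
  destruct (classic (D zj z)) as [A1|A1]; destruct (classic (D (f zi) (f z))) as [B1|B1].
  - apply (star z t' t).
    + intro h'. apply n1. apply (mk3r D zi t' z zj); auto.
    + intro h'. apply ht2. apply (mk2 D zj z t); auto.
    + intro h'. apply ht1. apply (mk2 D zi t' t); auto.
    + intro h'. apply ht'2. apply (mk2 D (f zi) (f z) (f t')); auto.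
    + intro h'. apply n2. apply (mk3r D (f zi) (f z) (f t) (f zj)); auto.
    + intro h'. apply ht'3. apply (mk2 D (f zj) (f t) (f t')); auto.
  - apply (star z zi t).
    + intro h'; apply nzi; auto.
    + intro h'. apply ht2. apply (mk2 D zj z t); auto.
    + intro h'. apply ht1. apply (mk2 D zi zi t); auto.
    + intro h'; apply B1; auto.
    + intro h'. apply hz'. apply hV2. apply (mk2 D (f zj) (f t) (f z)); auto.
    + intro h'. apply n2. apply (mk3r D (f zi) (f t) (f zj) (f zj)); auto.
  - apply (star z zj t').
    + intro h'; apply A1; auto.
    + intro h'. apply hz. apply hV2. apply (mk2 D zi t' z); auto.
    + intro h'. apply n1. apply (mk3r D zi t' zj zj); auto.
    + intro h'. apply n2. apply (mk3r D (f zi) (f z) (f zj) (f zj)); auto.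
    + intro h'. apply ht'2. apply (mk2 D (f zi) (f z) (f t')); auto.
    + intro h'. apply ht'3. apply (mk2 D (f zj) (f zj) (f t')); auto.
  - destruct (cov z) as [h|[h|[h|h]]]; contradiction.
Qed.

Lemma D3_sym {T} (D : T -> T -> Prop) : symmetric D -> forall x y, D3r D x y -> D3r D y x.
Proof. intros hs x y [a [h1 [b [h2 h3]]]]. apply (mk3r D y b a x); auto. Qed.

Lemma CL_comb {T : Type} (D V : T -> T -> Prop) (f finv : T -> T)
  (hDs : symmetric D) (hDr : forall x, D x x)
  (hV : forall x y, D4r D x y -> V x y)
  (hfi : forall y, f (finv y) = y)
  p1 p2 p3 (q12 : ~ V p1 p2) (q13 : ~ V p1 p3) (q23 : ~ V p2 p3)
  (star : forall x y z, ~ D x y -> ~ D x z -> ~ D y z -> ~ D (f x) (f y) -> ~ D (f x) (f z) ->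
          ~ D (f y) (f z) -> False) :
  exists r a, forall x, ~ V r x -> V a (f x).
Proof.
  assert (hV3 : forall x y, D3r D x y -> V x y).
  { intros x y [m [h1 h2]]; apply hV; exists x; split; auto; exists m; auto. }
  destruct (classic (exists z1 z2, ~ D3r D z1 z2 /\ ~ D3r D (f z1) (f z2))) as [[z1 [z2 [n1 n2]]]|HI].
  2: { exists p1, (f p1). intros x hx. apply hV3. apply NNPP. intro h.
       apply HI. exists p1, x. split; auto. }
  assert (cov : forall z, D z1 z \/ D z2 z \/ D (f z1) (f z) \/ D (f z2) (f z)).
  { intro z. apply NNPP. intro hn. apply (star z1 z2 z).
    - intro h; apply n1; apply (mk3r D z1 z2 z2 z2); auto.
    - intro h; apply hn; auto.
    - intro h; apply hn; auto.
    - intro h; apply n2; apply (mk3r D (f z1) (f z2) (f z2) (f z2)); auto.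
    - intro h; apply hn; auto.
    - intro h; apply hn; auto. }
  assert (pig : forall q1 q2 q3, ~ V q1 q2 -> ~ V q1 q3 -> ~ V q2 q3 ->
     exists t, ~ D2r D z1 t /\ ~ D2r D z2 t).
  { intros q1 q2 q3 r12 r13 r23. apply NNPP. intro hn.
    assert (hc : forall t, D2r D z1 t \/ D2r D z2 t).
    { intro t. apply NNPP. intro h. apply hn. exists t. tauto. }
    assert (hsame : forall u v z, D2r D z u -> D2r D z v -> V u v).
    { intros u v z [m1 [a1 a2]] [m2 [b1 b2]]. apply hV. apply (mk4 D u m1 z m2 v); auto. }
    destruct (hc q1) as [c1|c1]; destruct (hc q2) as [c2|c2]; destruct (hc q3) as [c3|c3];
      eauto. }
  destruct (pig p1 p2 p3 q12 q13 q23) as [t [ht1 ht2]].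
  assert (TL : exists t', ~ D2r D (f z1) (f t') /\ ~ D2r D (f z2) (f t')).
  { assert (H12 : ~ V (f (finv p1)) (f (finv p2))) by (rewrite !hfi; auto).
    assert (H13 : ~ V (f (finv p1)) (f (finv p3))) by (rewrite !hfi; auto).
    assert (H23 : ~ V (f (finv p2)) (f (finv p3))) by (rewrite !hfi; auto).
    apply NNPP. intro hn.
    assert (hc : forall t', D2r D (f z1) (f t') \/ D2r D (f z2) (f t')).
    { intro t'. apply NNPP. intro h. apply hn. exists t'. tauto. }
    assert (hsame : forall u v z, D2r D z (f u) -> D2r D z (f v) -> V (f u) (f v)).
    { intros u v z [m1 [a1 a2]] [m2 [b1 b2]]. apply hV. apply (mk4 D (f u) m1 z m2 (f v)); auto. }
    destruct (hc (finv p1)) as [c1|c1]; destruct (hc (finv p2)) as [c2|c2];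
      destruct (hc (finv p3)) as [c3|c3];
      first [apply H12; eauto; fail | apply H13; eauto; fail | apply H23; eauto]. }
  destruct TL as [t' [ht'1 ht'2]].
  destruct (cov t') as [h|[h|[h|h]]].
  - exists z1, (f z2). eapply (CL_sub D V f hDs hDr hV star z1 z2); eauto.
  - exists z2, (f z1). eapply (CL_sub D V f hDs hDr hV star z2 z1); eauto.
    + intro h'; apply n1; apply D3_sym; auto.
    + intro h'; apply n2; apply D3_sym; auto.
    + intro z. destruct (cov z) as [?|[?|[?|?]]]; tauto.
  - exfalso; apply ht'1; apply (mk2 D (f z1) (f t') (f t')); auto.
  - exfalso; apply ht'2; apply (mk2 D (f z2) (f t') (f t')); auto.
Qed.

Definition bad {T : Type} {tT : topology T} (V : T -> T -> Prop) (p : T) (c : TEnt tT) : Prop :=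
  match c with inl x => V p x | inr e => ~ small (proj1_sig e) (V p) end.
Definition good {T : Type} {tT : topology T} (V : T -> T -> Prop) (p : T) (c : TEnt tT) : Prop :=
  match c with inl x => V p x | inr e => small (proj1_sig e) (fun q => ~ V p q) end.
Definition sep {T : Type} {tT : topology T} (V : T -> T -> Prop) (c c' : TEnt tT) : Prop :=
  forall p, ~ (bad V p c /\ bad V p c') /\ ~ (good V p c /\ good V p c').
Definition nbT {T : Type} {tT : topology T} (V : T -> T -> Prop) (c : TEnt tT) : TEnt tT -> Prop :=
  match c with
  | inl x => fun w => match w with inl t => V x t | inr f => small (proj1_sig f) (fun q => ~ V x q) end
  | inr e => fun w => w = inr e
  end.
Definition loc {T : Type} {tT : topology T} (V : T -> T -> Prop) (c : TEnt tT) (p : T) : Prop :=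
  match c with inl x => exists q, V x q /\ V p q | inr _ => False end.

Lemma sep_sym {T} {tT : topology T} V (c c' : TEnt tT) : sep V c c' -> sep V c' c.
Proof. intros h p. destruct (h p); split; tauto. Qed.

Lemma sep_mono {T} {tT : topology T} (V V' : T -> T -> Prop) (c c' : TEnt tT) :
  (forall x y, V' x y -> V x y) -> sep V c c' -> sep V' c c'.
Proof.
  intros hsub h p. destruct (h p) as [h1 h2].
  assert (hb : forall c0 : TEnt tT, bad V' p c0 -> bad V p c0).
  { intros [x|e]; simpl; auto. intros hn hs. apply hn. intros u v hu hv; apply hs; auto. }
  assert (hg : forall c0 : TEnt tT, good V' p c0 -> good V p c0).
  { intros [x|e]; simpl; auto. intros hs u v hu hv. apply hs; intro; auto. }
  split; intros [k1 k2]; [apply h1|apply h2]; split; auto.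
Qed.

Lemma nb_open {T} (tT : topology T) (A : Ent tT -> Prop) (V : T -> T -> Prop) (c : TEnt tT) :
  uopen tT V -> Ttilde_top tT A (fun w => nbT V c (proj1_sig w)).
Proof.
  intros [hs [ho hr]]. exists (nbT V c). split; [|intro; tauto].
  destruct c as [x|e]; simpl.
  - intros t ht. destruct (ho x t ht) as [U0 [U1 [h0 [h1 [u0 [u1 hb]]]]]].
    exists U1. split; auto. split; auto. split.
    + intros s hs'; apply hb; auto.
    + intros f hf u v hu hv. apply hf; intro; [apply hu|apply hv]; apply hb; auto.
  - intros t ht. discriminate.
Qed.

Lemma nb_self {T} (tT : topology T) (V : T -> T -> Prop) (c : TEnt tT) :
  (forall x, V x x) -> nbT V c c.
Proof. intros hr. destruct c; simpl; auto. Qed.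

Lemma nb_loc {T} (tT : topology T) (A : Ent tT -> Prop)
  (hA_sl : forall e, A e -> self_linked (proj1_sig e)) (V : T -> T -> Prop) (c : TEnt tT) :
  uopen tT V -> (forall e, c = inr e -> forall x y z, V x y -> V y z -> proj1_sig e x z) ->
  forall w : Ttilde tT A, nbT V c (proj1_sig w) -> forall p,
    (bad V p (proj1_sig w) \/ good V p (proj1_sig w)) -> loc V c p.
Proof.
  intros [hs [ho hr]] hreq [w hw] hnb p hbg. simpl in *.
  destruct c as [x|e]; simpl in *.
  - destruct w as [t|f]; simpl in *.
    + exists t. destruct hbg; auto.
    + assert (hsl := hA_sl f hw).
      destruct hbg as [hb|hg].
      * apply NNPP. intro hn. apply hb. intros u v hu hv. apply hnb; intro h; apply hn.
        -- exists u; auto.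
        -- exists v; auto.
      * apply NNPP. intro hn. apply hsl. exists (fun q => ~ V p q), (fun q => ~ V x q).
        split; auto. split; auto. intro q. apply NNPP. intro h. apply hn. exists q.
        split; apply NNPP; intro; apply h; auto.
  - subst w. simpl in *. assert (hsl := hA_sl e hw).
    assert (hsm : small (proj1_sig e) (V p)).
    { intros u v hu hv. apply (hreq e eq_refl u p v); auto. }
    destruct hbg as [hb|hg].
    + apply hb; auto.
    + apply hsl. exists (fun q => ~ V p q), (V p). split; auto. split; auto.
      intro q. destruct (classic (V p q)); auto.
Qed.

Lemma loc_disj {T} {tT : topology T} (V : T -> T -> Prop) (c c' : TEnt tT) p :
  symmetric V -> (forall x y, c = inl x -> c' = inl y -> ~ D4r V x y) ->
  loc V c p -> loc V c' p -> False.
Proof.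
  intros hs hreq. destruct c as [x|e]; destruct c' as [y|e']; simpl; try tauto.
  intros [q [h1 h2]] [q' [h3 h4]]. apply (hreq x y eq_refl eq_refl).
  apply (mk4 V x q p q' y); auto.
Qed.

Lemma sep_of_loc {T} {tT : topology T} (A : Ent tT -> Prop)
  (hA_sl : forall e, A e -> self_linked (proj1_sig e)) (V : T -> T -> Prop) (c c' : TEnt tT) :
  uopen tT V ->
  (forall e, c = inr e -> forall x y z, V x y -> V y z -> proj1_sig e x z) ->
  (forall e, c' = inr e -> forall x y z, V x y -> V y z -> proj1_sig e x z) ->
  (forall x y, c = inl x -> c' = inl y -> ~ D4r V x y) ->
  forall u v : Ttilde tT A, nbT V c (proj1_sig u) -> nbT V c' (proj1_sig v) ->
  sep V (proj1_sig u) (proj1_sig v).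
Proof.
  intros hV r1 r2 r3 u v hu hv p. pose proof hV as [hs _].
  split; intros [k1 k2];
    apply (loc_disj V c c' p hs r3); [eapply (nb_loc tT A hA_sl V c hV r1 u hu p) | eapply (nb_loc tT A hA_sl V c' hV r2 v hv p)
      | eapply (nb_loc tT A hA_sl V c hV r1 u hu p) | eapply (nb_loc tT A hA_sl V c' hV r2 v hv p)]; auto.
Qed.

Lemma ReqC {T} (tT : topology T) : is_topology tT -> forall c : TEnt tT, exists W, uopen tT W /\
  forall V, uopen tT V -> (forall x z, D4r V x z -> W x z) ->
  forall e, c = inr e -> forall x y z, V x y -> V y z -> proj1_sig e x z.
Proof.
  intros ht [x|e].
  - exists (fun _ _ => True). split. apply uopen_true; auto. intros; discriminate.
  - destruct (proj2_sig e) as [_ [W [hs [ho [hr hsub]]]]].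
    exists W. split. split; auto. intros V hV hW e' he x y z h1 h2.
    injection he as <-. apply hsub. apply hW. destruct hV as [_ [_ hr']].
    apply (mk4 V x y z z z); auto.
Qed.

Lemma ReqP {T} (tT : topology T) : compactum tT -> forall c c' : TEnt tT, c <> c' -> exists W,
  uopen tT W /\ forall V, (forall x z, D4r V x z -> W x z) ->
  forall x y, c = inl x -> c' = inl y -> ~ D4r V x y.
Proof.
  intros hT c c' hne. pose proof hT as [ht _].
  destruct c as [x|e]; destruct c' as [y|e'];
    try (exists (fun _ _ => True); split; [apply uopen_true; auto| intros; discriminate]).
  assert (hxy : x <> y) by (intro; subst; auto).
  destruct (Wpair tT hT x y hxy) as [W [hW hn]]. exists W. split; auto.
  intros V hV x' y' h1 h2 h. injection h1 as <-. injection h2 as <-. apply hn; auto.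
Qed.

Lemma sig_ne {T} {tT : topology T} (A : Ent tT -> Prop) (c c' : Ttilde tT A) :
  c <> c' -> proj1_sig c <> proj1_sig c'.
Proof.
  intros hne he. apply hne. destruct c as [c hc]; destruct c' as [c' hc']; simpl in he.
  subst c'. f_equal. apply proof_irrelevance.
Qed.

Lemma local_sep {T} (tT : topology T) (A : Ent tT -> Prop) (hT : compactum tT)
  (hA_sl : forall e, A e -> self_linked (proj1_sig e)) (c1 c2 c3 : Ttilde tT A) :
  c1 <> c2 -> c1 <> c3 -> c2 <> c3 ->
  exists V, uopen tT V /\
   (forall u v : Ttilde tT A, nbT V (proj1_sig c1) (proj1_sig u) -> nbT V (proj1_sig c2) (proj1_sig v) ->
       sep V (proj1_sig u) (proj1_sig v)) /\
   (forall u v : Ttilde tT A, nbT V (proj1_sig c1) (proj1_sig u) -> nbT V (proj1_sig c3) (proj1_sig v) ->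
       sep V (proj1_sig u) (proj1_sig v)) /\
   (forall u v : Ttilde tT A, nbT V (proj1_sig c2) (proj1_sig u) -> nbT V (proj1_sig c3) (proj1_sig v) ->
       sep V (proj1_sig u) (proj1_sig v)).
Proof.
  intros n12 n13 n23. pose proof hT as [ht _].
  apply sig_ne in n12; apply sig_ne in n13; apply sig_ne in n23.
  destruct (ReqC tT ht (proj1_sig c1)) as [W1 [hW1 r1]].
  destruct (ReqC tT ht (proj1_sig c2)) as [W2 [hW2 r2]].
  destruct (ReqC tT ht (proj1_sig c3)) as [W3 [hW3 r3]].
  destruct (ReqP tT hT _ _ n12) as [W12 [hW12 r12]].
  destruct (ReqP tT hT _ _ n13) as [W13 [hW13 r13]].
  destruct (ReqP tT hT _ _ n23) as [W23 [hW23 r23]].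
  set (W := rinter W1 (rinter W2 (rinter W3 (rinter W12 (rinter W13 W23))))).
  assert (hW : uopen tT W) by (repeat apply uopen_inter; auto).
  destruct (unif tT hT W hW) as [V1 [hV1 hV1W]].
  destruct (unif tT hT V1 hV1) as [V [hV hVV1]].
  assert (h4 : forall x z, D4r V x z -> W x z).
  { intros x w [b [hb [c [hc [d [hd hw]]]]]]. apply (hV1W x c w); eauto. }
  assert (p1 : forall x z, D4r V x z -> W1 x z) by (intros x z h; apply h4 in h; apply h).
  assert (p2 : forall x z, D4r V x z -> W2 x z) by (intros x z h; apply h4 in h; apply h).
  assert (p3 : forall x z, D4r V x z -> W3 x z) by (intros x z h; apply h4 in h; apply h).
  assert (p12 : forall x z, D4r V x z -> W12 x z) by (intros x z h; apply h4 in h; apply h).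
  assert (p13 : forall x z, D4r V x z -> W13 x z) by (intros x z h; apply h4 in h; apply h).
  assert (p23 : forall x z, D4r V x z -> W23 x z) by (intros x z h; apply h4 in h; apply h).
  exists V. split; auto. split; [|split].
  - exact (sep_of_loc A hA_sl V _ _ hV (r1 V hV p1) (r2 V hV p2) (r12 V p12)).
  - exact (sep_of_loc A hA_sl V _ _ hV (r1 V hV p1) (r3 V hV p3) (r13 V p13)).
  - exact (sep_of_loc A hA_sl V _ _ hV (r2 V hV p2) (r3 V hV p3) (r23 V p23)).
Qed.

Definition Nset {X : Type} (U1 U2 U3 : X -> Prop) (S : Theta3 X) : Prop :=
  exists x y z, is3set (proj1_sig S) x y z /\ U1 x /\ U2 y /\ U3 z.

Lemma is3_swap12 {X} (S : X -> Prop) a b c : is3set S a b c -> is3set S b a c.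
Proof. intros [h1 [h2 [h3 h4]]]. split; [auto|split; [auto|split; [auto|]]]; intro w; rewrite h4; tauto. Qed.
Lemma is3_swap23 {X} (S : X -> Prop) a b c : is3set S a b c -> is3set S a c b.
Proof. intros [h1 [h2 [h3 h4]]]. split; [auto|split; [auto|split; [auto|]]]; intro w; rewrite h4; tauto. Qed.

Ltac tryperm h := first [ exact h | apply is3_swap12; exact h | apply is3_swap23; exact h
  | apply is3_swap12; apply is3_swap23; exact h | apply is3_swap23; apply is3_swap12; exact h
  | apply is3_swap12; apply is3_swap23; apply is3_swap12; exact h ].

Ltac fin3 :=
    (split; [assumption|split; [assumption|split; [assumption|split; [assumption|split; [assumption|split; [assumption|]]]]]]);
    let S' := fresh "S'" in let x' := fresh "x'" in let y' := fresh "y'" in let z' := fresh "z'" in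
    let h1 := fresh "h1" in let h2 := fresh "h2" in let h3 := fresh "h3" in let h := fresh "h" in
    intros S' x' y' z' h1 h2 h3 h;
    first [ solve [exists x', y', z'; split; [tryperm h|tauto]]
          | solve [exists x', z', y'; split; [tryperm h|tauto]]
          | solve [exists y', x', z'; split; [tryperm h|tauto]]
          | solve [exists y', z', x'; split; [tryperm h|tauto]]
          | solve [exists z', x', y'; split; [tryperm h|tauto]]
          | solve [exists z', y', x'; split; [tryperm h|tauto]] ].

Lemma Nset_open {X} (tX : topology X) U1 U2 U3 : tX U1 -> tX U2 -> tX U3 ->
  theta3_top tX (Nset U1 U2 U3).
Proof.
  intros o1 o2 o3 S a b c [x [y [z [his [u1 [u2 u3]]]]]] habc.
  pose proof habc as [n1 [n2 [n3 hS]]].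
  pose proof his as [_ [_ [_ hS']]].
  assert (ha : a = x \/ a = y \/ a = z) by (apply hS'; apply hS; auto).
  assert (hb : b = x \/ b = y \/ b = z) by (apply hS'; apply hS; auto).
  assert (hc : c = x \/ c = y \/ c = z) by (apply hS'; apply hS; auto).
  destruct ha as [ -> | [ -> | -> ] ]; destruct hb as [ -> | [ -> | -> ] ]; destruct hc as [ -> | [ -> | -> ] ];
    try (exfalso; congruence);
    first [ solve [exists U1, U2, U3; fin3] | solve [exists U1, U3, U2; fin3]
          | solve [exists U2, U1, U3; fin3] | solve [exists U2, U3, U1; fin3]
          | solve [exists U3, U1, U2; fin3] | solve [exists U3, U2, U1; fin3] ].
Qed.

Definition goodset {T : Type} {tT : topology T} {A : Ent tT -> Prop} (V : T -> T -> Prop)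
  (S : Theta3 (Ttilde tT A)) : Prop :=
  forall c c', proj1_sig S c -> proj1_sig S c' -> c <> c' -> sep V (proj1_sig c) (proj1_sig c').

Lemma goodset_mono {T} {tT : topology T} {A : Ent tT -> Prop} (V V' : T -> T -> Prop) S :
  (forall x y, V' x y -> V x y) -> @goodset T tT A V S -> goodset V' S.
Proof. intros hs h c c' h1 h2 h3. apply (sep_mono V); auto. Qed.

Definition nbS {T : Type} {tT : topology T} (A : Ent tT -> Prop) (V : T -> T -> Prop) (c : Ttilde tT A)
  : Ttilde tT A -> Prop := fun w => nbT V (proj1_sig c) (proj1_sig w).

Lemma goodset_of_N {T} {tT : topology T} (A : Ent tT -> Prop) (V : T -> T -> Prop) (c1 c2 c3 : Ttilde tT A) :
   (forall u v : Ttilde tT A, nbT V (proj1_sig c1) (proj1_sig u) -> nbT V (proj1_sig c2) (proj1_sig v) ->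
       sep V (proj1_sig u) (proj1_sig v)) ->
   (forall u v : Ttilde tT A, nbT V (proj1_sig c1) (proj1_sig u) -> nbT V (proj1_sig c3) (proj1_sig v) ->
       sep V (proj1_sig u) (proj1_sig v)) ->
   (forall u v : Ttilde tT A, nbT V (proj1_sig c2) (proj1_sig u) -> nbT V (proj1_sig c3) (proj1_sig v) ->
       sep V (proj1_sig u) (proj1_sig v)) ->
   forall S, Nset (nbS A V c1) (nbS A V c2) (nbS A V c3) S -> goodset V S.
Proof.
  intros s12 s13 s23 S [x [y [z [[_ [_ [_ hS]]] [u1 [u2 u3]]]]]] c c' hc hc' hne.
  unfold nbS in *.
  apply hS in hc; apply hS in hc'.
  destruct hc as [ -> | [ -> | -> ] ]; destruct hc' as [ -> | [ -> | -> ] ];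
    try (exfalso; apply hne; reflexivity); auto; apply sep_sym; auto.
Qed.

Lemma Ksep {T} (tT : topology T) (A : Ent tT -> Prop) (hT : compactum tT)
  (hA_sl : forall e, A e -> self_linked (proj1_sig e)) (K : Theta3 (Ttilde tT A) -> Prop) :
  compact (theta3_top (Ttilde_top tT A)) K -> forall V0, uopen tT V0 ->
  exists V, uopen tT V /\ (forall x y, V x y -> V0 x y) /\ forall S, K S -> goodset V S.
Proof.
  intros hK V0 hV0. pose proof hT as [ht _].
  set (F := fun N => exists V c1 c2 c3, uopen tT V /\
     N = Nset (nbS A V c1) (nbS A V c2) (nbS A V c3) /\
   (forall u v : Ttilde tT A, nbT V (proj1_sig c1) (proj1_sig u) -> nbT V (proj1_sig c2) (proj1_sig v) ->
       sep V (proj1_sig u) (proj1_sig v)) /\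
   (forall u v : Ttilde tT A, nbT V (proj1_sig c1) (proj1_sig u) -> nbT V (proj1_sig c3) (proj1_sig v) ->
       sep V (proj1_sig u) (proj1_sig v)) /\
   (forall u v : Ttilde tT A, nbT V (proj1_sig c2) (proj1_sig u) -> nbT V (proj1_sig c3) (proj1_sig v) ->
       sep V (proj1_sig u) (proj1_sig v))).
  destruct (hK F) as [l [hl1 hl2]].
  - intros N [V [c1 [c2 [c3 [hV [-> _]]]]]]. apply Nset_open; apply nb_open; auto.
  - intros S hS. destruct (proj2_sig S) as [c1 [c2 [c3 his]]].
    pose proof his as [n12 [n13 [n23 _]]].
    destruct (local_sep tT A hT hA_sl c1 c2 c3 n12 n13 n23) as [V [hV [s12 [s13 s23]]]].
    exists (Nset (nbS A V c1) (nbS A V c2) (nbS A V c3)). split.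
    + exists V, c1, c2, c3. split; [exact hV|split; [reflexivity|auto]].
    + exists c1, c2, c3. destruct hV as [_ [_ hr]]. unfold nbS.
      split; auto. split; [|split]; apply nb_self; auto.
  - assert (aux : forall l', (forall N, In N l' -> F N) -> exists V, uopen tT V /\
       (forall x y, V x y -> V0 x y) /\ forall N, In N l' -> forall S, N S -> goodset V S).
    { induction l' as [|N l' IH]; intro Hl.
      - exists V0. split; auto. split; auto. intros N [].
      - destruct IH as [V' [hV' [hV'0 hV'g]]]. { intros; apply Hl; right; auto. }
        destruct (Hl N (or_introl eq_refl)) as [V [c1 [c2 [c3 [hV [hN [s12 [s13 s23]]]]]]]].
        exists (rinter V V'). split; [apply uopen_inter; auto|]. split.
        + intros x y [_ h]; auto.
        + intros N0 [Heq|Hin] S hS.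
          * apply (goodset_mono V). intros x y [h _]; auto.
            subst N0. rewrite hN in hS. exact (goodset_of_N A V c1 c2 c3 s12 s13 s23 S hS).
          * apply (goodset_mono V'). intros x y [_ h]; auto. eapply hV'g; eauto. }
    destruct (aux l hl1) as [V [hV [hV0' hg]]]. exists V. split; auto. split; auto.
    intros S hS. destruct (hl2 S hS) as [N [hin hN]]. eapply hg; eauto.
Qed.

Lemma gmulVr (G : group) (g : G) : gmul G g (ginv G g) = gone G.
Proof.
  set (h := ginv G g).
  rewrite <- (gmul1 G (gmul G g h)).
  rewrite <- (gmulV G h) at 1.
  rewrite <- gmulA. rewrite (gmulA G h g h).
  unfold h at 2 3. rewrite gmulV. rewrite gmul1. apply gmulV.
Qed.

Lemma act_inv1 {G : group} {T} {tT : topology T} (a : action G tT) g y : a g (a (ginv G g) y) = y.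
Proof. rewrite <- actM. rewrite gmulVr. apply act1. Qed.
Lemma act_inv2 {G : group} {T} {tT : topology T} (a : action G tT) g x : a (ginv G g) (a g x) = x.
Proof. rewrite <- actM. rewrite gmulV. apply act1. Qed.

Lemma act_inj {G : group} {T} {tT : topology T} (a : action G tT) g x y : a g x = a g y -> x = y.
Proof. intro h. rewrite <- (act_inv2 a g x), <- (act_inv2 a g y). rewrite h; auto. Qed.

Lemma Ent_eq {T} {tT : topology T} (e e' : Ent tT) :
  (forall x y, proj1_sig e x y <-> proj1_sig e' x y) -> e = e'.
Proof.
  intro h. destruct e as [e he]; destruct e' as [e' he']; simpl in h.
  assert (e = e'). { apply functional_extensionality; intro x. apply pred_ext. apply h. }
  subst e'. f_equal. apply proof_irrelevance.
Qed.

Lemma rel_inj {G : group} {T} {tT : topology T} (a : action G tT) (A : Ent tT -> Prop) g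
  (c c' w : Ttilde tT A) : Ttilde_rel a A g c w -> Ttilde_rel a A g c' w -> c = c'.
Proof.
  destruct c as [c hc]; destruct c' as [c' hc']; destruct w as [w hw]. unfold Ttilde_rel; simpl.
  intros h1 h2. assert (c = c').
  { destruct c as [x|e]; destruct c' as [x'|e']; destruct w as [y|f]; simpl in *; try tauto.
    - subst y. f_equal. eapply act_inj; eauto.
    - f_equal. apply Ent_eq. intros x y. split; intro h.
      + assert (hr : rel_img (a g) (proj1_sig e) (a g x) (a g y)) by (exists x, y; auto).
        apply h1 in hr. apply h2 in hr. destruct hr as [x1 [y1 [he [hx hy]]]].
        apply act_inj in hx; apply act_inj in hy. subst; auto.
      + assert (hr : rel_img (a g) (proj1_sig e') (a g x) (a g y)) by (exists x, y; auto).
        apply h2 in hr. apply h1 in hr. destruct hr as [x1 [y1 [he [hx hy]]]].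
        apply act_inj in hx; apply act_inj in hy. subst; auto. }
  subst c'. f_equal. apply proof_irrelevance.
Qed.

Lemma img_good {G : group} {T} {tT : topology T} (a : action G tT) (A : Ent tT -> Prop)
  (hA_inv : forall (g : G) e, A e -> exists e', A e' /\
      forall x y, proj1_sig e' x y <-> rel_img (a g) (proj1_sig e) x y)
  (V : T -> T -> Prop) g r a0 (hc : forall x, ~ V r x -> V a0 (a g x)) (c : Ttilde tT A) :
  ~ bad V r (proj1_sig c) -> exists w : Ttilde tT A, Ttilde_rel a A g c w /\ good V a0 (proj1_sig w).
Proof.
  destruct c as [[x|e] hce]; simpl; intro hnb.
  - exists (exist (inTA tT A) (inl (a g x)) I). unfold Ttilde_rel; simpl. split; auto.
  - destruct (hA_inv g e hce) as [e' [he' hiff]].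
    exists (exist (inTA tT A) (inr e') he'). unfold Ttilde_rel; simpl. split; auto.
    assert (hs : small (proj1_sig e) (V r)) by (apply NNPP; auto).
    intros q1 q2 hq1 hq2. apply hiff. exists (a (ginv G g) q1), (a (ginv G g) q2).
    rewrite !act_inv1. split; auto. apply hs.
    + apply NNPP; intro h. apply hq1. rewrite <- (act_inv1 a g q1). apply hc; auto.
    + apply NNPP; intro h. apply hq2. rewrite <- (act_inv1 a g q2). apply hc; auto.
Qed.

Lemma final_contra {G : group} {T} {tT : topology T} (a : action G tT) (A : Ent tT -> Prop)
  (hA_inv : forall (g : G) e, A e -> exists e', A e' /\
      forall x y, proj1_sig e' x y <-> rel_img (a g) (proj1_sig e) x y)
  (V : T -> T -> Prop) g r a0 (hc : forall x, ~ V r x -> V a0 (a g x))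
  (S S' : Theta3 (Ttilde tT A)) : goodset V S -> goodset V S' ->
  moves3 (Ttilde_rel a A) g S S' -> False.
Proof.
  intros gS gS' hm.
  destruct (proj2_sig S) as [c1 [c2 [c3 [n12 [n13 [n23 hS]]]]]].
  assert (key : forall ci cj, proj1_sig S ci -> proj1_sig S cj -> ci <> cj ->
     ~ bad V r (proj1_sig ci) -> ~ bad V r (proj1_sig cj) -> False).
  { intros ci cj hi hj hne bi bj.
    destruct (img_good a A hA_inv V g r a0 hc ci bi) as [wi [ri gi]].
    destruct (img_good a A hA_inv V g r a0 hc cj bj) as [wj [rj gj]].
    assert (Si : proj1_sig S' wi) by (apply hm; exists ci; auto).
    assert (Sj : proj1_sig S' wj) by (apply hm; exists cj; auto).
    assert (wne : wi <> wj).
    { intro; subst wj. apply hne. eapply rel_inj; eauto. }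
    destruct (gS' wi wj Si Sj wne a0) as [_ h]. apply h; auto. }
  assert (h1 : proj1_sig S c1) by (apply hS; auto).
  assert (h2 : proj1_sig S c2) by (apply hS; auto).
  assert (h3 : proj1_sig S c3) by (apply hS; auto).
  destruct (gS c1 c2 h1 h2 n12 r) as [b12 _].
  destruct (gS c1 c3 h1 h3 n13 r) as [b13 _].
  destruct (gS c2 c3 h2 h3 n23 r) as [b23 _].
  destruct (classic (bad V r (proj1_sig c1))) as [k1|k1];
  destruct (classic (bad V r (proj1_sig c2))) as [k2|k2];
  destruct (classic (bad V r (proj1_sig c3))) as [k3|k3]; try tauto.
  - apply (key c2 c3); auto.
  - apply (key c1 c3); auto.
  - apply (key c1 c2); auto.
  - apply (key c1 c2); auto.
Qed.

Theorem proposition3p11 (G : group) (T : Type) (tT : topology T)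
  (hT : compactum tT) (a : action G tT)
  (h3 : three_discontinuous tT (fun g x y => y = a g x))
  (A : Ent tT -> Prop)
  (hA_sl : forall e, A e -> self_linked (proj1_sig e))
  (hA_inv : forall (g : G) e, A e -> exists e', A e' /\
      forall x y, proj1_sig e' x y <-> rel_img (a g) (proj1_sig e) x y)
  (hA_fin : exists L : list (Ent tT), (forall e, In e L -> A e) /\
      forall e, A e -> exists e0 (g : G), In e0 L /\
        forall x y, proj1_sig e x y <-> rel_img (a g) (proj1_sig e0) x y) :
  three_discontinuous (Ttilde_top tT A) (Ttilde_rel a A).
Proof.
  intros K hK.
  pose proof hT as [ht [hh [hc [p1 [p2 [p3 [d12 [d13 d23]]]]]]]].
  destruct (Wpair tT hT p1 p2 d12) as [W12 [hW12 n12]].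
  destruct (Wpair tT hT p1 p3 d13) as [W13 [hW13 n13]].
  destruct (Wpair tT hT p2 p3 d23) as [W23 [hW23 n23]].
  set (V0 := rinter W12 (rinter W13 W23)).
  assert (hV0 : uopen tT V0) by (repeat apply uopen_inter; auto).
  destruct (Ksep tT A hT hA_sl K hK V0 hV0) as [V [hV [hVV0 hgood]]].
  destruct (unif tT hT V hV) as [V1 [hV1 hV1V]].
  destruct (unif tT hT V1 hV1) as [D [hD hDV1]].
  assert (h4 : forall x z, D4r D x z -> V x z).
  { intros x w [b [hb [c [hc' [d [hd hw]]]]]]. apply (hV1V x c w); eauto. }
  pose proof hD as [hDs [hDo hDr]].
  destruct (h3 (QD D) (QD_compact tT D ht hc hDo hDr)) as [l hl].
  exists l. intros g [S [S' [hS [hS' hm]]]].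
  apply NNPP. intro hnin.
  assert (star : forall x y z, ~ D x y -> ~ D x z -> ~ D y z -> ~ D (a g x) (a g y) ->
          ~ D (a g x) (a g z) -> ~ D (a g y) (a g z) -> False).
  { intros x y z e1 e2 e3 f1 f2 f3.
    assert (nxy : x <> y) by (intro; subst; auto).
    assert (nxz : x <> z) by (intro; subst; auto).
    assert (nyz : y <> z) by (intro; subst; auto).
    assert (mxy : a g x <> a g y) by (intro h; rewrite h in f1; auto).
    assert (mxz : a g x <> a g z) by (intro h; rewrite h in f2; auto).
    assert (myz : a g y <> a g z) by (intro h; rewrite h in f3; auto).
    apply hnin. apply hl. exists (mk3 x y z nxy nxz nyz), (mk3 _ _ _ mxy mxz myz).
    split; [|split].
    - exists x, y, z. split; auto. apply tri_is3; auto.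
    - exists (a g x), (a g y), (a g z). split; auto. apply tri_is3; auto.
    - intro w. simpl. unfold tri. split.
      + intros [ -> | [ -> | -> ] ]; eauto.
      + intros [y0 [[ -> | [ -> | -> ] ] ->]]; auto. }
  assert (q12 : ~ V p1 p2) by (intro h; apply n12; apply hVV0; auto).
  assert (q13 : ~ V p1 p3) by (intro h; apply n13; apply hVV0; auto).
  assert (q23 : ~ V p2 p3) by (intro h; apply n23; apply hVV0; auto).
  destruct (CL_comb D V (a g) (a (ginv G g)) hDs hDr h4 (act_inv1 a g) p1 p2 p3 q12 q13 q23 star)
    as [r [a0 hcon]].
  exact (final_contra a A hA_inv V g r a0 hcon S S' (hgood S hS) (hgood S' hS') hm).
Qed.
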